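(* Let $2\le n\le\kappa+1$, $\ell=\binom{\kappa}{n-1}$, $\beta=\kappa\ell$, and let $D\in\mathbb R^{\beta\times n\kappa^n}$ be the matrix constructed below with rows $d_1,\dots,d_\beta$. Then for $i,j=1,\dots,\beta$, $$\langle d_i,d_j\rangle=\begin{cases}0,& i\neq j,\\ n!,& i=j.\end{cases}$$
   Context: Semi-tensor product: for $A\in\mathbb R^{m\times n}$, $B\in\mathbb R^{p\times q}$ and $t=\mathrm{lcm}(n,p)$, $A\ltimes B=(A\otimes I_{t/n})(B\otimes I_{t/p})$; associative. Swap matrix $W_{[m,n]}\in\mathbb R^{mn\times mn}$: the permutation matrix with $W_{[m,n]}(X\otimes Y)=Y\otimes X$ for $X\in\mathbb R^m,Y\in\mathbb R^n$ ($W_{[1,n]}=I_n$). $\delta_\kappa^j$ is the $j$-th column of $I_\kappa$. Let $z^1,\dots,z^\ell$ be the strictly increasing tuples $(z_1<\dots<z_{n-1})$ with entries in $\{1,\dots,\kappa\}$, in lexicographic order. For $i=1,\dots,\ell$, $j=1,\dots,\kappa$ define $\eta^i_j\in\mathbb R^{\kappa^n}$ (row) by $(\eta^i_j)^T=\delta_\kappa^j\otimes\sum_{\sigma\in\mathbf S_{n-1}}\mathrm{sgn}(\sigma)\,\delta_\kappa^{z^i_{\sigma(1)}}\otimes\cdots\otimes\delta_\kappa^{z^i_{\sigma(n-1)}}$; $B\in\mathbb R^{\kappa\ell\times\kappa^n}$ has rows $\eta^1_1,\dots,\eta^1_\kappa,\dots,\eta^\ell_1,\dots,\eta^\ell_\kappa$.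 Then $D=\left[B,\,-B\ltimes W_{[\kappa^0,\kappa]}\ltimes W_{[\kappa,\kappa]},\,-B\ltimes W_{[\kappa,\kappa]}\ltimes W_{[\kappa,\kappa^2]},\dots,-B\ltimes W_{[\kappa^{n-2},\kappa]}\ltimes W_{[\kappa,\kappa^{n-1}]}\right]$. $\langle\cdot,\cdot\rangle$ is the standard inner product. *)

(* Defs.v *)
From HB Require Import structures.
From mathcomp Require Import all_boot all_order all_algebra all_fingroup.
From mathcomp Require Import mxtens.
Set Implicit Arguments. Unset Strict Implicit. Unset Printing Implicit Defensive.
Import Order.TTheory GRing.Theory Num.Theory.
Local Open Scope ring_scope.

(* Kronecker product: [A *t B] from mathcomp.real_closed.mxtens, with the
   standard (row-major) indexing  (i1,i2) |-> i1 * p + i2. *)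

Lemma stp_dim (n p : nat) : (p * (lcmn n p %/ p) = n * (lcmn n p %/ n))%N.
Proof.
by rewrite [(p * _)%N]mulnC [(n * _)%N]mulnC !divnK ?dvdn_lcml ?dvdn_lcmr.
Qed.

Definition stp (R : pzRingType) (m n p q : nat)
  (A : 'M[R]_(m, n)) (B : 'M[R]_(p, q))
  : 'M[R]_(m * (lcmn n p %/ n), q * (lcmn n p %/ p)) :=
  (A *t (1%:M : 'M[R]_(lcmn n p %/ n))) *m
  castmx (stp_dim n p, erefl) (B *t (1%:M : 'M[R]_(lcmn n p %/ p))).

(* ---------- canonical basis vectors (0-based): deltav k a = δ_k^{a+1} ---------- *)
Definition deltav (R : pzRingType) (k a : nat) : 'cV[R]_k :=
  \col_(b < k) (b == a :> nat)%:R.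

(* ---------- swap matrix W_[m,n] = Σ_{i,j} (δ_n^j ⊗ δ_m^i)(δ_m^i ⊗ δ_n^j)^T,
   i.e. the permutation matrix with W (X ⊗ Y) = Y ⊗ X. ---------- *)
Definition swapmx (R : pzRingType) (m n : nat) : 'M[R]_(m * n) :=
  \sum_(i < m) \sum_(j < n)
    castmx (mulnC n m, erefl) (deltav R n j *t deltav R m i)
      *m (deltav R m i *t deltav R n j)^T.

Fixpoint kronf (R : pzRingType) (kap k : nat) : ('I_k -> nat) -> 'cV[R]_(kap ^ k) :=
  match k return ('I_k -> nat) -> 'cV[R]_(kap ^ k) with
  | 0 => fun _ => const_mx 1
  | k'.+1 => fun f =>
      castmx (esym (expnS kap k'), erefl)
        (deltav R kap (f ord0) *t kronf R kap (fun t => f (lift ord0 t)))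
  end.

(* ---------- the tuples z^1 < ... < z^ell (0-based entries in {0..kap-1}),
   strictly increasing, of length n-1, in lexicographic order ---------- *)
Fixpoint lexle (s t : seq nat) : bool :=
  match s, t with
  | [::], _ => true
  | _ :: _, [::] => false
  | x :: s', y :: t' => (x < y)%N || ((x == y) && lexle s' t')
  end.

Definition ztuples (kap n : nat) : seq (seq nat) :=
  sort lexle [seq map val (tval t) |
               t <- enum [set t : (n.-1).-tuple 'I_kap | sorted ltn (map val t)]].

Definition ell (kap n : nat) : nat := 'C(kap, n.-1).

(* (η^i_j)^T = δ_κ^j ⊗ Σ_{σ ∈ S_{n-1}} sgn σ δ^{z_{σ(1)}} ⊗ ... ⊗ δ^{z_{σ(n-1)}}
   (z : seq nat is the tuple z^i, j is 0-based) *)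
Definition etaT (R : pzRingType) (kap n : nat) (z : seq nat) (j : nat)
  : 'cV[R]_(kap * kap ^ n.-1) :=
  deltav R kap j *t
    \sum_(s : 'S_(n.-1)) ((-1) ^+ odd_perm s) *: kronf R kap (fun t => nth 0%N z (s t)).

(* B ∈ R^{κℓ × κ^n}, row r = i*κ + j (0-based) is η^{i+1}_{j+1}.
   (κ * κ^(n-1) = κ^n for n ≥ 1; conform_mx performs this identification.) *)
Definition Bmat (R : pzRingType) (kap n : nat) : 'M[R]_(kap * ell kap n, kap ^ n) :=
  \matrix_(r, c)
    (conform_mx (0 : 'rV[R]_(kap ^ n))
       (etaT R kap n (nth [::] (ztuples kap n) (r %/ kap)) (r %% kap))^T) 0 c.

Definition Dblock (R : pzRingType) (kap n : nat) (k : nat)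
  : 'M[R]_(kap * ell kap n, kap ^ n) :=
  if k == 0%N then Bmat R kap n
  else - conform_mx (0 : 'M[R]_(kap * ell kap n, kap ^ n))
           (stp (stp (Bmat R kap n) (swapmx R (kap ^ k.-1) kap))
                (swapmx R kap (kap ^ k))).

Definition Dmat (R : pzRingType) (kap n : nat)
  : 'M[R]_(kap * ell kap n, \sum_(k < n) kap ^ n) :=
  mxrow (fun k : 'I_n => Dblock R kap n k).

Definition rowdot (R : pzRingType) (m c : nat) (M : 'M[R]_(m, c)) (i j : 'I_m) : R :=
  \sum_(t < c) M i t * M j t.

(* Main.v *)
Set Warnings "-notation-overridden,-ambiguous-paths".
Require Import Defs.
From HB Require Import structures.
From mathcomp Require Import all_boot all_order all_algebra all_fingroup.
From mathcomp Require Import mxtens.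
Set Implicit Arguments. Unset Strict Implicit. Unset Printing Implicit Defensive.
Import Order.TTheory GRing.Theory Num.Theory.
Local Open Scope ring_scope.

Section G.
Variable R : realFieldType.

Definition geq r c r' c' (M : 'M[R]_(r, c)) (M' : 'M[R]_(r', c')) :=
  r = r' /\ forall (i j : 'I_r) (i' j' : 'I_r'), i = i' :> nat -> j = j' :> nat ->
  rowdot M i j = rowdot M' i' j'.

Lemma rowdotE r c (M : 'M[R]_(r, c)) i j : rowdot M i j = (M *m M^T) i j.
Proof. by rewrite mxE; apply: eq_bigr => t _; rewrite mxE. Qed.

Lemma geq_trans r c r' c' r'' c'' (M : 'M[R]_(r, c)) (M' : 'M[R]_(r', c'))
  (M'' : 'M[R]_(r'', c'')) : geq M M' -> geq M' M'' -> geq M M''.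
Proof.
case=> e1 h1 [e2 h2]; split; first by rewrite e1.
move=> i j i'' j'' ei ej.
have hi : (i < r')%N by rewrite -e1.
have hj : (j < r')%N by rewrite -e1.
by rewrite (h1 _ _ (Ordinal hi) (Ordinal hj)) // (h2 _ _ i'' j'').
Qed.

Lemma geq_cast r c r' c' (e : (r = r') * (c = c')) (M : 'M[R]_(r, c)) :
  geq (castmx e M) M.
Proof.
case: e => e1 e2; split; first by [].
case: r' / e1; case: c' / e2; rewrite castmx_id.
by move=> i j i' j' /val_inj -> /val_inj ->.
Qed.

Lemma geq_conform r c r' c' (B : 'M[R]_(r', c')) (M : 'M[R]_(r, c)) :
  r = r' -> c = c' -> geq (conform_mx B M) M.
Proof.
move=> e1 e2; case: r' / e1 in B *; case: c' / e2 in B *.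
by rewrite conform_mx_id; have := geq_cast (erefl r, erefl c) M; rewrite castmx_id.
Qed.

Lemma geq_opp r c (M : 'M[R]_(r, c)) : geq (- M) M.
Proof.
split=> // i j i' j' /val_inj -> /val_inj ->.
by rewrite /rowdot; apply: eq_bigr => t _; rewrite !mxE mulrNN.
Qed.

Lemma geq_mul r c c' (A : 'M[R]_(r, c)) (P : 'M[R]_(c, c')) :
  P *m P^T = 1%:M -> geq (A *m P) A.
Proof.
move=> hP; split=> // i j i' j' /val_inj -> /val_inj ->.
by rewrite !rowdotE trmx_mul mulmxA -(mulmxA A) hP mulmx1.
Qed.

Lemma geq_tens1 r c a (A : 'M[R]_(r, c)) : a = 1%N ->
  geq (A *t (1%:M : 'M[R]_a)) A.
Proof.
move=> ea; subst a; rewrite tens_mx_scalar scale1r; exact: geq_cast.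
Qed.

Lemma tens11 a b : (1%:M : 'M[R]_a) *t (1%:M : 'M[R]_b) = 1%:M.
Proof.
apply/matrixP=> i j.
case: (mxtens_indexP i)=> i0 i1; case: (mxtens_indexP j)=> j0 j1.
rewrite tensmxE !mxE (inj_eq (can_inj (@mxtens_indexK _ _))) xpair_eqE.
by case: (i0 == j0); case: (i1 == j1); rewrite ?mulr1 ?mulr0.
Qed.

Lemma orth_cast r s c (e : r = s) (Y : 'M[R]_(r, c)) :
  Y *m Y^T = 1%:M -> castmx (e, erefl) Y *m (castmx (e, erefl) Y)^T = 1%:M.
Proof. by case: s / e; rewrite castmx_id. Qed.

Lemma orth_tens a b (W : 'M[R]_a) : W *m W^T = 1%:M ->
  (W *t (1%:M : 'M[R]_b)) *m (W *t (1%:M : 'M[R]_b))^T = 1%:M.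
Proof. by move=> h; rewrite trmx_tens tensmx_mul h tr_scalar_mx mulmx1 tens11. Qed.

Lemma geq_stp m N p (A : 'M[R]_(m, N)) (W : 'M[R]_p) :
  (0 < N)%N -> (p %| N)%N -> W *m W^T = 1%:M -> geq (stp A W) A.
Proof.
move=> N0 pN hW; rewrite /stp.
apply: geq_trans (geq_mul _ _) _; first by apply: orth_cast; apply: orth_tens.
apply: geq_tens1.
by rewrite (lcmn_idPl pN) divnn N0.
Qed.


Lemma sum_pick m (F : 'I_m -> R) (i : 'I_m) :
  \sum_(i' < m) F i' * (i' == i)%:R = F i.
Proof.
rewrite (bigD1 i) //= eqxx mulr1 big1 ?addr0 // => k /negbTE ->.
by rewrite mulr0.
Qed.

Lemma idx_eq m n (a : nat) (i : 'I_m) (j : 'I_n) : (a < n * m)%N ->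
  (a == j * m + i)%N = ((a %/ m)%N == j) && ((a %% m)%N == i).
Proof.
move=> ha; have m0 : (0 < m)%N by case: (m) i => [[]|].
rewrite {1}(divn_eq a m) eq_addl_mul ?ltn_mod // xpair_eqE.
Qed.

Lemma swap_entry m n (a : 'I_(m * n)) (i : 'I_m) (j : 'I_n) :
  swapmx R m n a (mxtens_index (i, j)) = ((a : nat) == (j * m + i)%N)%:R.
Proof.
rewrite /swapmx summxE.
under eq_bigr do rewrite summxE.
under eq_bigr do under eq_bigr do rewrite !mxE big_ord1 !castmxE !mxE !mxtens_indexK /=.
rewrite (bigD1 i) //= [X in _ + X]big1 => [|i0 ne]; last first.
  rewrite big1 // => i1 _.
  rewrite (_ : (i == i0 :> nat) = false) ?mul0r ?mulr0 //; apply/negbTE; by rewrite eq_sym.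
rewrite addr0 (bigD1 j) //= [X in _ + X]big1 => [|i1 ne]; last first.
  rewrite (_ : (j == i1 :> nat) = false) ?mul0r ?mulr0 //; apply/negbTE; by rewrite eq_sym.
rewrite !eqxx !mulr1 !addr0 idx_eq; last by rewrite [(n * m)%N]mulnC.
by case: (_ == _); case: (_ == _); rewrite ?mulr1 ?mulr0.
Qed.


Lemma ord_decomp m n (a : 'I_(m * n)) :
  exists (i0 : 'I_m) (j0 : 'I_n), (a : nat) = (j0 * m + i0)%N.
Proof.
set a' := cast_ord (mulnC m n) a.
exists (mxtens_unindex a').2, (mxtens_unindex a').1.
have <- : (a' : nat) = a by [].
by rewrite -[in LHS](mxtens_unindexK a').
Qed.

Lemma swap_orth m n : swapmx R m n *m (swapmx R m n)^T = 1%:M.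
Proof.
apply/matrixP => a b; rewrite !mxE.
under eq_bigr do rewrite mxE.
transitivity (\sum_(i < m) \sum_(j < n) swapmx R m n a (mxtens_index (i, j)) *
   swapmx R m n b (mxtens_index (i, j))).
  rewrite pair_big /=; apply: (reindex (fun p : 'I_m * 'I_n => mxtens_index (p.1, p.2))).
  exists (@mxtens_unindex m n) => x _.
    by case: x => x1 x2; rewrite mxtens_indexK.
  by case: (mxtens_unindex x) (mxtens_unindexK x) => x1 x2.
have [i0 [j0 ha]] := ord_decomp a.
under eq_bigr do under eq_bigr do rewrite !swap_entry ha eq_addl_mul // xpair_eqE.
rewrite (bigD1 i0) //= [X in _ + X]big1 => [|i ne]; last first.
  rewrite big1 // => j _.
  by rewrite (_ : (i0 == i :> nat) = false) ?andbF ?mul0r //; apply/negbTE; rewrite eq_sym.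
rewrite addr0 (bigD1 j0) //= [X in _ + X]big1 => [|j ne]; last first.
  by rewrite (_ : (j0 == j :> nat) = false) ?mul0r //; apply/negbTE; rewrite eq_sym.
by rewrite !eqxx mul1r addr0 -ha eq_sym.
Qed.


Lemma stp_cols N p : (p %| N)%N -> (p * (lcmn N p %/ p) = N)%N.
Proof. by move=> pN; rewrite (lcmn_idPl pN) mulnC divnK. Qed.

Lemma stp_rows N p : (0 < N)%N -> (p %| N)%N -> (lcmn N p %/ N = 1)%N.
Proof. by move=> N0 pN; rewrite (lcmn_idPl pN) divnn N0. Qed.

Lemma Dblock_geq kap n (k : 'I_n) : (0 < kap)%N -> k != 0 :> nat ->
  geq (Dblock R kap n k) (Bmat R kap n).
Proof.
move=> k0 kn0; rewrite /Dblock (negbTE kn0) /=.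
have N0 : (0 < kap ^ n)%N by rewrite expn_gt0 k0.
have hk : (k.-1.+1 = k)%N by rewrite prednK // lt0n.
have d1 : (kap ^ k.-1 * kap %| kap ^ n)%N.
  by rewrite -expnSr hk dvdn_exp2l // ltnW.
have d2 : (kap * kap ^ k %| kap ^ n)%N by rewrite -expnS dvdn_exp2l.
eapply geq_trans; first exact: geq_opp.
eapply geq_trans.
  apply: geq_conform.
  - by rewrite !stp_rows ?muln1 // stp_cols.
  - by rewrite stp_cols // stp_cols.
eapply geq_trans.
  apply: geq_stp.
  - by rewrite stp_cols.
  - by rewrite stp_cols.
  - exact: swap_orth.
apply: geq_stp => //; exact: swap_orth.
Qed.


Definition dotc a (u v : 'cV[R]_a) := \sum_(c < a) u c 0 * v c 0.

Lemma dotc_cast a b (e : a = b) (u v : 'cV[R]_a) :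
  dotc (castmx (e, erefl) u) (castmx (e, erefl) v) = dotc u v.
Proof. by case: b / e; rewrite castmx_id. Qed.

Lemma dotc_tens a b (u1 v1 : 'cV[R]_a) (u2 v2 : 'cV[R]_b) :
  dotc (u1 *t u2) (v1 *t v2) = dotc u1 v1 * dotc u2 v2.
Proof.
rewrite /dotc mulr_sum; apply: eq_bigr => c _; rewrite !mxE.
rewrite !(ord1 (mxtens_unindex _).1) !(ord1 (mxtens_unindex _).2).
by rewrite mulrACA.
Qed.

Lemma dotc_delta kap (j j' : nat) : (j < kap)%N ->
  dotc (deltav R kap j) (deltav R kap j') = (j == j')%:R.
Proof.
move=> hj; rewrite /dotc.
under eq_bigr do rewrite !mxE.
rewrite (bigD1 (Ordinal hj)) //= eqxx mul1r big1 ?addr0 // => c hc.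
by rewrite (_ : (c == j :> nat) = false) ?mul0r //; apply/negbTE.
Qed.

Lemma dotc_suml a (I : finType) (F : I -> 'cV[R]_a) v :
  dotc (\sum_i F i) v = \sum_i dotc (F i) v.
Proof.
rewrite /dotc exchange_big; apply: eq_bigr => c _.
by rewrite summxE mulr_suml.
Qed.

Lemma dotc_sumr a (I : finType) (F : I -> 'cV[R]_a) v :
  dotc v (\sum_i F i) = \sum_i dotc v (F i).
Proof.
rewrite /dotc exchange_big; apply: eq_bigr => c _.
by rewrite summxE mulr_sumr.
Qed.

Lemma dotc_scalel a (x : R) (u v : 'cV[R]_a) : dotc (x *: u) v = x * dotc u v.
Proof. by rewrite /dotc mulr_sumr; apply: eq_bigr => c _; rewrite mxE mulrA. Qed.

Lemma dotc_scaler a (x : R) (u v : 'cV[R]_a) : dotc u (x *: v) = x * dotc u v.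
Proof. by rewrite /dotc mulr_sumr; apply: eq_bigr => c _; rewrite mxE mulrCA. Qed.

Lemma dotc_kronf kap k (f g : 'I_k -> nat) :
  (forall t, f t < kap)%N ->
  dotc (kronf R kap f) (kronf R kap g) = \prod_(t < k) (f t == g t)%:R.
Proof.
elim: k f g => [|k IH] f g hf /=.
  by rewrite big_ord0 /dotc; under eq_bigr do rewrite !mxE mulr1; rewrite sumr_const card_ord.
rewrite dotc_cast dotc_tens dotc_delta // IH ?big_ord_recl //.
Qed.


Lemma prod_ind m (z z' : seq nat) (s s' : 'S_m) :
  size z = m -> size z' = m -> sorted ltn z -> sorted ltn z' ->
  \prod_(t < m) (nth 0 z (s t) == nth 0 z' (s' t))%:R = ((z == z') && (s == s'))%:R :> R.
Proof.
move=> sz sz' srt srt'.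
have uz : uniq z by apply: sorted_uniq srt; [exact: ltn_trans | exact: ltnn].
case: (boolP [forall t, nth 0 z (s t) == nth 0 z' (s' t)]) => H; last first.
  move/forallPn: H => [t /negbTE ht].
  rewrite (bigD1 t) //= ht mul0r.
  case: (z =P z') => [ez|] //=; case: (s =P s') => [es|] //=.
  by rewrite ez es eqxx in ht.
have Ht : forall t, nth 0 z (s t) = nth 0 z' (s' t) by move=> t; apply/eqP/(forallP H).
rewrite big1 => [|t _]; last by rewrite Ht eqxx.
have ezz : z = z'.
  apply: (irr_sorted_eq ltn_trans ltnn srt srt') => x.
  apply/idP/idP => /(nthP 0) [i hi <-].
    have hi' : (i < m)%N by rewrite -sz.
    have := Ht ((s^-1)%g (Ordinal hi')); rewrite permKV /= => ->.
    by apply: mem_nth; rewrite sz'.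
  have hi' : (i < m)%N by rewrite -sz'.
  have := Ht ((s'^-1)%g (Ordinal hi')); rewrite permKV /= => <-.
  by apply: mem_nth; rewrite sz.
have ess : s = s'.
  apply/permP => t; apply/val_inj/eqP.
  rewrite -(nth_uniq 0 _ _ uz) ?sz ?ltn_ord //; apply/eqP; move: (Ht t); rewrite -ezz; exact.
by rewrite ezz ess !eqxx.
Qed.


Lemma etaT_dot kap n (z z' : seq nat) (j j' : nat) :
  (j < kap)%N -> size z = n.-1 -> size z' = n.-1 ->
  sorted ltn z -> sorted ltn z' -> all (fun x => x < kap)%N z ->
  dotc (etaT R kap n z j) (etaT R kap n z' j') =
  ((j == j') && (z == z'))%:R * (n.-1)`!%:R.
Proof.
move=> hj sz sz' srt srt' hall.
rewrite /etaT dotc_tens dotc_delta // dotc_suml.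
have hf : forall s : 'S_(n.-1), forall t, (nth 0 z (s t) < kap)%N.
  by move=> s t; apply: (allP hall); apply: mem_nth; rewrite sz.
under eq_bigr => s _ do rewrite dotc_scalel dotc_sumr.
under eq_bigr => s _ do under eq_bigr => s' _ do rewrite dotc_scaler dotc_kronf // prod_ind //.
case: (j =P j') => [_|] /=; last first.
  by move=> _; rewrite !mul0r.
rewrite mul1r; case: (z =P z') => [ezz|] /=; last first.
  by move=> _; rewrite mul0r big1 // => s _; rewrite big1 ?mulr0 // => s' _; rewrite !mulr0.
rewrite mul1r.
have h : forall s : 'S_(n.-1),
    (-1) ^+ s * \sum_(s' : 'S_(n.-1)) (-1) ^+ s' * (s == s')%:R = 1 :> R.
  move=> s; rewrite (bigD1 s) //= eqxx mulr1 [X in _ + X]big1 ?addr0.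
    by rewrite -expr2 sqrr_sign.
  by move=> s' hs'; rewrite eq_sym (negbTE hs') mulr0.
under eq_bigr => s _ do rewrite h.
by rewrite sumr_const card_Sn.
Qed.


Lemma ztuples_size kap n : size (ztuples kap n) = ell kap n.
Proof.
by rewrite /ztuples size_sort size_map -cardE card_ltn_sorted_tuples.
Qed.

Lemma ztuples_uniq kap n : uniq (ztuples kap n).
Proof.
rewrite /ztuples sort_uniq map_inj_uniq ?enum_uniq //.
move=> t1 t2 /= /(inj_map val_inj) h; exact: val_inj.
Qed.

Lemma ztuples_mem kap n z : z \in ztuples kap n ->
  [/\ size z = n.-1, sorted ltn z & all (fun x => x < kap)%N z].
Proof.
rewrite /ztuples mem_sort => /mapP [t]; rewrite mem_enum inE => ht ->.
split => //; first by rewrite size_map size_tuple.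
by apply/allP => x /mapP [y _ ->]; apply: ltn_ord.
Qed.

Lemma conf_dot a b (e : a = b) (u v : 'cV[R]_a) :
  \sum_(c < b) (conform_mx (0 : 'rV[R]_b) u^T) 0 c * (conform_mx (0 : 'rV[R]_b) v^T) 0 c
  = dotc u v.
Proof.
case: b / e; rewrite !conform_mx_id /dotc; apply: eq_bigr => c _; by rewrite !mxE.
Qed.

Lemma Bmat_dot kap n (r r' : 'I_(kap * ell kap n)) : (0 < n)%N ->
  rowdot (Bmat R kap n) r r' = (r == r')%:R * (n.-1)`!%:R.
Proof.
move=> n0.
have k0 : (0 < kap)%N by case: (kap) r => // [[]].
have e : (kap * kap ^ n.-1 = kap ^ n)%N by rewrite -expnS prednK.
rewrite /rowdot; under eq_bigr do rewrite !mxE.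
rewrite (conf_dot e).
have hd : forall x : 'I_(kap * ell kap n), (x %/ kap < size (ztuples kap n))%N.
  by move=> x; rewrite ztuples_size ltn_divLR // [(ell kap n * kap)%N]mulnC.
have [sz srt hall] := ztuples_mem (mem_nth [::] (hd r)).
have [sz' srt' _] := ztuples_mem (mem_nth [::] (hd r')).
rewrite etaT_dot ?ltn_mod //.
rewrite (nth_uniq _ _ _ (ztuples_uniq _ _)) //.
congr (_%:R * _).
congr (nat_of_bool _); apply/andP/eqP.
  move=> [/eqP h1 /eqP h2]; apply/val_inj.
  by rewrite /= (divn_eq r kap) (divn_eq r' kap) h1 h2.
by move=> ->; rewrite !eqxx.
Qed.


Lemma Dblock_dot kap n (k : 'I_n) (i j : 'I_(kap * ell kap n)) : (0 < n)%N ->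
  rowdot (Dblock R kap n k) i j = rowdot (Bmat R kap n) i j.
Proof.
move=> n0; have k0 : (0 < kap)%N by case: (kap) i => // [[]].
case: (boolP (k == 0 :> nat)) => hk.
  by rewrite /Dblock hk.
by have [_ h] := Dblock_geq k0 hk; apply: h.
Qed.

Lemma fact_aux n : (0 < n)%N -> 1 * (n.-1)`!%:R *+ n = n`!%:R :> R.
Proof. by move=> n0; rewrite mul1r -mulr_natr -natrM -[in RHS](prednK n0) factS mulnC prednK. Qed.

End G.

Theorem proposition4p7 (R : realFieldType) (kap n : nat)
  (hn2 : (2 <= n)%N) (hnk : (n <= kap + 1)%N)
  (i j : 'I_(kap * ell kap n)) :
  rowdot (Dmat R kap n) i j = (if i == j then (n`!)%:R else 0).
Proof.
have n0 : (0 < n)%N by apply: leq_trans hn2.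
rewrite rowdotE /Dmat tr_mxrow mul_mxrow_mxcol summxE.
under eq_bigr => k _ do rewrite -rowdotE Dblock_dot // Bmat_dot //.
rewrite sumr_const card_ord -mulr_natl.
case: eqP => _.
  by rewrite mulr1n !mul1r -[in RHS](prednK n0) factS natrM mulrC mulr_natr prednK.
by rewrite !mul0r mul0rn.
Qed.
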